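(* A local homomorphism $\Lambda\to\Lambda_1$ of discrete valuation rings of mixed characteristic $(0,p)$ is slightly ramified if and only if $e_1<p$, where $e_1$ is the absolute ramification index of $\Lambda_1$ (the valuation of $p$ in $\Lambda_1$).
   Context: For a local ring $(R,\mathfrak m_R)$, $\hat\Gamma(R,\mathfrak m_R)$ is the inverse limit of the system of finite-length local $R$-algebras with a divided power structure on their maximal ideal (transition maps divided power homomorphisms). A local homomorphism $\Lambda\to\Lambda_1$ is slightly ramified if the composite $\Lambda\to\hat\Gamma(\Lambda_1,\mathfrak m_{\Lambda_1})$ is injective, and highly ramified otherwise. *)

(* Defs.v *)
From HB Require Import structures.
From mathcomp Require Import all_boot all_order all_algebra.
Set Implicit Arguments. Unset Strict Implicit. Unset Printing Implicit Defensive.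
Import Order.TTheory GRing.Theory Num.Theory.
Local Open Scope ring_scope.

(* A commutative ring with units A is local: 1 <> 0 (built into the
   structure) and the non-units form an ideal (closed under addition);
   the maximal ideal is then the set of non-units. *)
Definition is_local (A : comUnitRingType) : Prop :=
  forall x y : A, x \notin GRing.unit -> y \notin GRing.unit ->
    (x + y) \notin GRing.unit.

Definition maxideal (A : comUnitRingType) (x : A) : Prop := x \notin GRing.unit.

Definition local_hom (L L1 : comUnitRingType) (f : L -> L1) : Prop :=
  forall x : L, x \notin GRing.unit -> f x \notin GRing.unit.

Definition is_uniformizer (L : idomainType) (pi : L) : Prop :=
  pi != 0 /\ pi \notin GRing.unit /\
  forall x : L, x != 0 -> exists (n : nat) (u : L), u \in GRing.unit /\ x = u * pi ^+ n.

Definition is_dvr (L : idomainType) : Prop := exists pi : L, is_uniformizer pi.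

(* Mixed characteristic (0,p): characteristic 0, residue characteristic p. *)
Definition mixed_char (L : idomainType) (p : nat) : Prop :=
  prime p /\ (forall n : nat, (0 < n)%N -> n%:R != 0 :> L) /\
  (p%:R : L) \notin GRing.unit.

(* Submodules of A, where A is an R-module via the ring map g : R -> A. *)
Definition is_submodule (R A : comUnitRingType) (g : R -> A) (S : A -> Prop) : Prop :=
  S 0 /\ (forall a b, S a -> S b -> S (a + b)) /\ (forall r a, S a -> S (g r * a)).

(* A has finite length as an R-module: it admits a composition series
   0 = M_0 < M_1 < ... < M_n = A with simple successive quotients. *)
Definition finite_length (R A : comUnitRingType) (g : R -> A) : Prop :=
  exists (n : nat) (M : nat -> A -> Prop),
    (forall a, M 0%N a <-> a = 0) /\ (forall a, M n a) /\
    (forall i, (i <= n)%N -> is_submodule g (M i)) /\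
    (forall i, (i < n)%N ->
       (forall a, M i a -> M i.+1 a) /\ (exists a, M i.+1 a /\ ~ M i a) /\
       (forall N : A -> Prop, is_submodule g N ->
          (forall a, M i a -> N a) -> (forall a, N a -> M i.+1 a) ->
          (forall a, N a -> M i a) \/ (forall a, M i.+1 a -> N a))).

Definition is_pd_structure (A : comUnitRingType) (I : A -> Prop)
  (gamma : nat -> A -> A) : Prop :=
  forall x y : A, I x -> I y ->
    gamma 0%N x = 1 /\ gamma 1%N x = x /\
        (forall n, (1 <= n)%N -> I (gamma n x)) /\
        (forall n, gamma n (x + y) = \sum_(i < n.+1) gamma i x * gamma (n - i)%N y) /\
        (forall (l : A) n, gamma n (l * x) = l ^+ n * gamma n x) /\
        (forall m n, gamma m x * gamma n x = 'C(m + n, m)%:R * gamma (m + n)%N x) /\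
        (forall m n, (1 <= n)%N ->
           gamma m (gamma n x) =
             ((m * n)`! %/ (m`! * (n`! ^ m)))%:R * gamma (m * n)%N x).

(* The objects of the inverse system defining hat-Gamma(R, m_R): finite-length
   local R-algebras A (structure map g) with a PD structure on m_A. *)
Definition pd_test_algebra (R A : comUnitRingType) (g : {rmorphism R -> A}) : Prop :=
  is_local A /\ finite_length g /\
  exists gamma : nat -> A -> A, is_pd_structure (@maxideal A) gamma.

(* f : L -> L1 is slightly ramified iff L -> hat-Gamma(L1, m_{L1}) is injective.
   An element of the inverse limit is zero iff all its components are zero, so
   the kernel of L -> hat-Gamma(L1) is the intersection of the kernels of the
   composites L -> L1 -> A over all objects A of the system. *)
Definition slightly_ramified (L L1 : comUnitRingType) (f : {rmorphism L -> L1}) : Prop :=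
  forall x : L,
    (forall (A : comUnitRingType) (g : {rmorphism L1 -> A}),
        pd_test_algebra g -> g (f x) = 0) ->
    x = 0.

Definition highly_ramified (L L1 : comUnitRingType) (f : {rmorphism L -> L1}) : Prop :=
  ~ slightly_ramified f.

(* Main.v *)
From HB Require Import structures.
From mathcomp Require Import all_boot all_order all_algebra.
From mathcomp Require Import boolp generic_quotient ring_quotient.
From mathcomp Require Import ring zify.
Require Import Defs.
Set Implicit Arguments. Unset Strict Implicit. Unset Printing Implicit Defensive.
Import GRing.Theory.
Local Open Scope ring_scope.
Local Open Scope quotient_scope.
Section Q.
Variables (R : idomainType) (pi : R) (N : nat).
Definition Jm (x : R) : Prop := exists r, x = pi ^+ N * r.
Definition Ipred : pred R := fun x => `[< (Jm 1 /\ x = 0) \/ (~ Jm 1 /\ Jm x) >].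

Lemma Ipred_closed : idealr_closed Ipred.
Proof.
have [J1|nJ1] := pselect (Jm 1).
  split.
  - by apply/asboolP; left.
  - by apply/asboolP; case=> [[_ /eqP]|[]//]; rewrite oner_eq0.
  - move=> a u v /asboolP [[_ ->]|[]//] /asboolP [[_ ->]|[]//].
    by apply/asboolP; left; rewrite mulr0 addr0.
split.
- by apply/asboolP; right; split=> //; exists 0; rewrite mulr0.
- by apply/asboolP; case=> [[]//|[]].
- move=> a u v /asboolP [[]//|[_ [r ->]]] /asboolP [[]//|[_ [s ->]]].
  apply/asboolP; right; split=> //; exists (a * r + s).
  by rewrite mulrDr mulrCA.
Qed.

HB.instance Definition _ := isIdealr.Build R Ipred Ipred_closed.

Definition Iid : idealr R := Idealr.clone R Ipred _.
Local Notation Q0 := {ideal_quot Iid}.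
Definition unitQ : {pred Q0} := fun q => `[< exists r, r * q = 1 >].
Definition invQ (q : Q0) : Q0 :=
  match pselect (exists r : Q0, r * q = 1) with
  | left h => sval (cid h) | right _ => q end.
Lemma mulVQ : {in unitQ, left_inverse 1 invQ *%R}.
Proof.
move=> q /asboolP hq; rewrite /invQ; case: pselect => [h|h]; [by case: (cid h) | by case: h].
Qed.
Lemma unitPlQ : forall x y : Q0, y * x = 1 -> unitQ x.
Proof. by move=> x y h; apply/asboolP; exists y. Qed.
Lemma invQ_out : {in [predC unitQ], invQ =1 id}.
Proof.
move=> q; rewrite inE => /asboolP h; rewrite /invQ; case: pselect => h' //; by case: h.
Qed.
HB.instance Definition _ := GRing.ComNzRing_hasMulInverse.Build Q0 mulVQ unitPlQ invQ_out.
Lemma unitQE (q : Q0) : (q \in GRing.unit) = `[< exists r, r * q = 1 >].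
Proof. by []. Qed.
End Q.
Section L1.
Variables (R : idomainType) (p : nat) (pi u : R) (e : nat).
Hypotheses (hpi : is_uniformizer pi) (hch : mixed_char R p)
  (hp : p%:R = u * pi ^+ e) (hu : u \in GRing.unit).

Lemma L_nonunit x : x \notin GRing.unit -> exists r, x = pi * r.
Proof.
move=> hx; have [->|x0] := eqVneq x 0; first by exists 0; rewrite mulr0.
move: hx; case: hpi => _ [_ /(_ x x0)] [[|n] [v [hv ->]]].
  by rewrite expr0 mulr1 hv.
by move=> _; exists (v * pi ^+ n); rewrite exprS mulrCA.
Qed.

Lemma L_pinu r : pi * r \notin GRing.unit.
Proof. by rewrite unitrM negb_and; case: hpi => _ [-> _]. Qed.

Lemma L_1pi r : (1 + pi * r) \in GRing.unit.
Proof.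
apply/negPn/negP => /L_nonunit [s hs].
have : (1 : R) = pi * (s - r) by rewrite mulrBr -hs addrK.
by move=> h; move: (L_pinu (s - r)); rewrite -h unitr1.
Qed.

Lemma L_cop m : ~~ (p %| m)%N -> (m%:R : R) \in GRing.unit.
Proof.
move=> hm; apply/negPn/negP => /L_nonunit [r hr].
case: hch => pp [_ /L_nonunit [t ht]].
have [a _] := @Bezoutl p m (prime_gt0 pp).
have -> : gcdn p m = 1%N by apply/eqP; rewrite -/(coprime p m) prime_coprime.
case/dvdnP => k hk.
have : (1 : R) = pi * (k%:R * t - a%:R * r).
  by rewrite mulrBr !mulrA ![pi * _]mulrC -!mulrA -ht -hr -!natrM -hk natrD addrK.
by move=> h; move: (L_pinu (k%:R * t - a%:R * r)); rewrite -h unitr1.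
Qed.

Lemma L_factdec n : exists c, c \in GRing.unit /\
  (n`!)%:R = c * (p%:R : R) ^+ (n %/ p) * ((n %/ p)`!)%:R.
Proof.
case: hch => pp _; have p0 := prime_gt0 pp.
elim: n => [|n [c [hc IH]]].
  by exists 1; rewrite unitr1 div0n /= mul1r expr0 mulr1.
rewrite divnS //; case: (boolP (p %| n.+1)%N) => hd /=.
  exists c; split => //.
  have hn : n.+1 = ((n %/ p).+1 * p)%N.
    by rewrite -{1}(divnK hd) divnS // hd.
  rewrite add1n factS natrM IH [in LHS]hn factS !natrM exprS; ring.
exists (n.+1%:R * c); split; first by rewrite unitrM hc L_cop.
by rewrite add0n factS natrM IH; ring.
Qed.

Lemma L_div : (e < p)%N -> forall n, (0 < n)%N -> exists w, pi ^+ n.-1 = (n`!)%:R * w.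
Proof.
move=> he n; elim/ltn_ind: n => n IH n0.
case: hch => pp _; have p1 := prime_gt1 pp.
have [c [hc hf]] := L_factdec n.
set q := (n %/ p)%N in hf.
have hqn : (q * p <= n)%N by apply: leq_trunc_div.
have [q0|qpos] := eqVneq q 0%N.
  exists (c^-1 * pi ^+ n.-1); rewrite hf q0 /= expr0 mulr1 mulr1 mulrA mulrV //.
  by rewrite mul1r.
have qlt : (q < n)%N by apply: ltn_Pdiv.
have [wq hwq] := IH q qlt (ltac:(by rewrite lt0n)).
have hle : (e.+1 * q <= p * q)%N by rewrite leq_mul2r he orbT.
have hk : (e * q + q.-1 + (n.-1 - (e * q + q.-1)) = n.-1)%N.
  rewrite subnKC //; move: hle hqn qpos; rewrite mulSn mulnC; lia.
exists (c^-1 * (u ^+ q)^-1 * wq * pi ^+ (n.-1 - (e * q + q.-1))).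
set k := (n.-1 - _)%N in hk *.
rewrite hf hp exprMn -hk !exprD hwq exprM.
transitivity ((c * c^-1) * (u ^+ q * (u ^+ q)^-1) *
   (pi ^+ e ^+ q * ((q`!)%:R * wq) * pi ^+ k)).
  by rewrite mulrV // mulrV ?unitrX // !mul1r.
ring.
Qed.
End L1.
Lemma Kdiv m n : (0 < n)%N -> (m`! * n`! ^ m %| (m * n)`!)%N.
Proof.
move=> n0; elim: m => [|m IH]; first by rewrite mul0n fact0 expn0.
have hb := bin_fact (leq_addl (m * n) n); rewrite addnK in hb.
have hd := mul_bin_diag (m * n + n) n.-1; rewrite prednK // in hd.
have hC : 'C(m * n + n, n) = (m.+1 * 'C((m * n + n).-1, n.-1))%N.
  apply/eqP; rewrite -(eqn_pmul2l n0) -hd; apply/eqP.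
  by rewrite mulnA [(n * _)%N]mulnC mulSn addnC.
rewrite mulSn addnC -hb hC factS expnS.
have -> : (m.+1 * m`! * (n`! * n`! ^ m) = (m.+1 * n`!) * (m`! * n`! ^ m))%N by ring.
have -> : (m.+1 * 'C((m * n + n).-1, n.-1) * (n`! * (m * n)`!) =
   (m.+1 * n`!) * ('C((m * n + n).-1, n.-1) * (m * n)`!))%N by ring.
by apply: dvdn_mul => //; apply: dvdn_mull.
Qed.

Section G.
Variables (R : idomainType).
Hypothesis char0 : forall n, (0 < n)%N -> n%:R != 0 :> R.

Definition G n (x : R) : R :=
  match pselect (exists y, (n`!)%:R * y = x ^+ n) with
  | left h => sval (cid h) | right _ => 0 end.

Lemma fact_neq0 n : (n`!)%:R != 0 :> R.
Proof. exact: char0 (fact_gt0 n). Qed.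

Lemma GP n x y : (n`!)%:R * y = x ^+ n -> G n x = y.
Proof.
move=> hy; rewrite /G; case: pselect => [h|h]; last by case: h; exists y.
case: (cid h) => z hz /=; apply: (mulfI (fact_neq0 n)); by rewrite hz.
Qed.

Definition GS x := forall n, (n`!)%:R * G n x = x ^+ n.

Lemma G0 x : G 0 x = 1.
Proof. by apply: GP; rewrite fact0 mul1r expr0. Qed.

Lemma G1 x : G 1 x = x.
Proof. by apply: GP; rewrite mul1r expr1. Qed.

Lemma GM n l x : GS x -> G n (l * x) = l ^+ n * G n x.
Proof. by move=> hx; apply: GP; rewrite mulrCA hx exprMn. Qed.

Lemma GD n x y : GS x -> GS y ->
  G n (x + y) = \sum_(i < n.+1) G i x * G (n - i) y.
Proof.
move=> hx hy; apply: GP; rewrite big_distrr addrC exprDn; apply: eq_bigr => i _.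
have hi : (i <= n)%N by rewrite -ltnS ltn_ord.
rewrite /= -[RHS]mulr_natl -(bin_fact hi) !natrM.
transitivity ('C(n, i)%:R * (((i`!)%:R * G i x) * (((n - i)`!)%:R * G (n - i) y))).
  by ring.
by rewrite hx hy; ring.
Qed.

Lemma Gprod m n x : GS x -> G m x * G n x = 'C(m + n, m)%:R * G (m + n) x.
Proof.
move=> hx; apply: (mulfI (mulf_neq0 (fact_neq0 m) (fact_neq0 n))).
transitivity (((m`!)%:R * G m x) * ((n`!)%:R * G n x)); first by ring.
have hb := bin_fact (leq_addr n m); rewrite addKn in hb.
transitivity (((('C(m + n, m) * (m`! * n`!))%N)%:R) * G (m + n) x).
  by rewrite hb hx hx hx exprD.
by rewrite !natrM; ring.
Qed.

Lemma Gcomp m n x : (0 < n)%N -> GS x -> GS (G n x) ->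
  G m (G n x) = (((m * n)`! %/ (m`! * n`! ^ m))%N)%:R * G (m * n) x.
Proof.
move=> n0 hx hgx.
have hK := divnK (Kdiv m n0).
have nz : ((m`! * n`! ^ m)%N)%:R != 0 :> R by apply: char0; rewrite muln_gt0 fact_gt0 expn_gt0 fact_gt0.
apply: (mulfI nz).
transitivity ((n`!)%:R ^+ m * ((m`!)%:R * G m (G n x))).
  by rewrite natrM natrX; ring.
by rewrite hgx -exprMn hx -exprM mulrA -natrM [(m`! * _ * _)%N]mulnC hK hx mulnC.
Qed.
End G.
Section QL.
Variables (R : idomainType) (pi : R) (N : nat).
Hypotheses (hpi : is_uniformizer pi) (N0 : (0 < N)%N).
Local Notation A := {ideal_quot (Iid pi N)}.
Local Notation pq := (\pi_A : R -> A).

Lemma notJ1 : ~ Jm pi N 1.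
Proof.
case=> t ht; move: (L_pinu hpi (pi ^+ N.-1 * t)).
by rewrite mulrA -exprS prednK // -ht unitr1.
Qed.

Lemma memI x : (x \in Iid pi N) = `[< Jm pi N x >].
Proof.
rewrite /in_mem /= /Ipred; apply/asboolP/asboolP.
  by case=> [[/notJ1]|[]].
by move=> h; right; split => //; exact: notJ1.
Qed.

Lemma eqA x y : pq x = pq y <-> Jm pi N (x - y).
Proof.
split.
  by move=> /eqP; rewrite -Quotient.idealrBE memI => /asboolP.
by move=> h; apply/eqP; rewrite -Quotient.idealrBE memI; apply/asboolP.
Qed.

Variables (p : nat) (u : R) (e : nat).
Hypotheses (hch : mixed_char R p) (hp : p%:R = u * pi ^+ e) (hu : u \in GRing.unit)
  (he : (e < p)%N).

Lemma char0 n : (0 < n)%N -> n%:R != 0 :> R.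
Proof. by case: hch => _ [h _]; apply: h. Qed.

Lemma Gex n r : exists y, ((n`!)%:R * y = (pi * r) ^+ n) /\ ((0 < n)%N -> exists s, y = pi * s).
Proof.
case: n => [|n]; first by exists 1; rewrite fact0 mulr1 expr0.
have [w hw] := L_div hpi hch hp hu he (ltn0Sn n).
exists (pi * (w * r ^+ n.+1)); split; last by exists (w * r ^+ n.+1).
have hw' : pi ^+ n = _ := hw.
transitivity (pi * ((n.+1`!)%:R * w) * r ^+ n.+1); first by ring.
by rewrite -hw' exprMn [pi ^+ n.+1]exprS.
Qed.

Lemma GSpi r : GS (pi * r).
Proof.
move=> n; have [y [hy _]] := Gex n r; by rewrite (GP char0 hy).
Qed.

Lemma Gpi n r : (0 < n)%N -> exists s, G n (pi * r) = pi * s.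
Proof.
move=> n0; have [y [hy /(_ n0) [s hs]]] := Gex n r.
by exists s; rewrite (GP char0 hy).
Qed.

Lemma piN s : pi ^+ N * s = pi * (pi ^+ N.-1 * s).
Proof. by rewrite mulrA -exprS prednK. Qed.

Lemma Ghigh n s : (0 < n)%N -> exists t, G n (pi ^+ N * s) = pi ^+ N * t.
Proof.
move=> n0.
have hk : (N + n.-1 + (N * n - n.-1 - N) = N * n)%N.
  have : (N + n.-1 <= N * n)%N.
    case: N N0 => // M _; case: n n0 => // m _ /=; rewrite mulSn mulnS; lia.
  lia.
have [w hw] := L_div hpi hch hp hu he n0.
set k := (N * n - n.-1 - N)%N in hk *.
exists (w * pi ^+ k * s ^+ n).
apply: GP; first exact: char0.
rewrite exprMn -exprM -hk !exprD hw; ring.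
Qed.

Lemma Jm_sum n (F : 'I_n -> R) : (forall i, Jm pi N (F i)) -> Jm pi N (\sum_(i < n) F i).
Proof.
move=> hF; apply: (big_ind (Jm pi N)) => //.
- by exists 0; rewrite mulr0.
- by move=> x y [a ->] [b ->]; exists (a + b); rewrite mulrDr.
Qed.

Lemma WD n c c' : (exists r, c = pi * r) -> (exists r, c' = pi * r) ->
  Jm pi N (c - c') -> Jm pi N (G n c - G n c').
Proof.
move=> [r hr] [r' hr'] [d hd].
have hc : c = c' + pi ^+ N * d by rewrite -hd addrC subrK.
have gs1 : GS c' by rewrite hr'; exact: GSpi.
have gs2 : GS (pi ^+ N * d) by rewrite piN; exact: GSpi.
rewrite hc (GD char0 n gs1 gs2) big_ord_recr /= subnn (G0 char0) mulr1 addrK.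
apply: Jm_sum => i.
have [t ht] := Ghigh d (ltac:(by rewrite subn_gt0 ltn_ord) : (0 < n - i)%N).
by rewrite ht; exists (G i c' * t); rewrite mulrCA.
Qed.

Lemma unitA x : (pq x \in GRing.unit) = (x \in GRing.unit).
Proof.
apply/idP/idP.
- rewrite unitQE => /asboolP [a ha].
  apply/negPn/negP => /(L_nonunit hpi) [s hs].
  have : pq (repr a * x) = pq 1.
 by rewrite rmorphM /= reprK ha rmorph1.
  move/eqA => [t ht].
  have h1 : (1 : R) = pi * (repr a * s - pi ^+ N.-1 * t).
    by rewrite mulrBr -piN -ht hs; ring.
  by move: (L_pinu hpi (repr a * s - pi ^+ N.-1 * t)); rewrite -h1 unitr1.
- move=> hx; rewrite unitQE; apply/asboolP; exists (pq x^-1).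
  by rewrite -rmorphM mulVr // rmorph1.
Qed.

Lemma nonunitA (a : A) : a \notin GRing.unit -> exists r, repr a = pi * r.
Proof. by move=> ha; apply: (L_nonunit hpi); rewrite -unitA reprK. Qed.

Lemma localA : is_local A.
Proof.
move=> x y hx hy; have [r hr] := nonunitA hx; have [s hs] := nonunitA hy.
by rewrite -[x]reprK -[y]reprK hr hs -rmorphD -mulrDr unitA L_pinu.
Qed.

Definition gam (n : nat) (a : A) : A := pq (G n (repr a)).

Lemma gamWD n (a : A) c : (exists r, c = pi * r) -> pq c = a -> a \notin GRing.unit ->
  gam n a = pq (G n c).
Proof.
move=> hc hca ha; rewrite /gam; apply/eqA; apply: WD => //.
  exact: nonunitA.
by apply/eqA; rewrite reprK.
Qed.

Lemma pdA : is_pd_structure (@maxideal A) gam.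
Proof.
move=> x y hx hy; have [ra hra] := nonunitA hx; have [rb hrb] := nonunitA hy.
split; first by rewrite /gam (G0 char0) rmorph1.
split; first by rewrite /gam (G1 char0) reprK.
split.
  move=> n n1; rewrite /maxideal /gam hra; have [s ->] := @Gpi n ra n1.
  by rewrite unitA L_pinu.
split.
  move=> n; rewrite (@gamWD n _ (pi * (ra + rb))); last first.
  - exact: localA.
  - by rewrite mulrDr rmorphD /= -hra -hrb !reprK.
  - by exists (ra + rb).
  rewrite mulrDr (GD char0 n (@GSpi ra) (@GSpi rb)) rmorph_sum; apply: eq_bigr => i _.
  by rewrite rmorphM /gam hra hrb.
split.
  move=> l n; rewrite (@gamWD n _ (repr l * (pi * ra))); last first.
  - by rewrite unitrM negb_and hx orbT.
  - by rewrite rmorphM /= reprK -hra reprK.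
  - by exists (repr l * ra); rewrite mulrCA.
  by rewrite (GM char0 _ _ (@GSpi ra)) rmorphM rmorphXn /= reprK /gam hra.
split.
  by move=> m n; rewrite /gam -rmorphM hra (Gprod char0 _ _ (@GSpi ra)) rmorphM rmorph_nat.
move=> m n n1; have [s hs] := @Gpi n ra n1.
have hn : gam n x = pq (G n (pi * ra)) by rewrite /gam hra.
rewrite (@gamWD m _ (G n (pi * ra))); last first.
- by rewrite hn hs unitA L_pinu.
- by rewrite hn.
- by exists s.
rewrite (Gcomp char0 _ n1 (@GSpi ra)); last by rewrite hs; exact: GSpi.
by rewrite rmorphM rmorph_nat /gam hra.
Qed.

Lemma pq0 r : pq (pi ^+ N * r) = 0.
Proof. by rewrite -(rmorph0 (\pi_A : {rmorphism R -> A})); apply/eqA; exists r; rewrite subr0. Qed.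

Lemma flA : finite_length (\pi_A : {rmorphism R -> A}).
Proof.
exists N, (fun i a => exists r, a = pq (pi ^+ (N - i) * r)).
split.
  move=> a; rewrite subn0; split; first by case=> r ->; rewrite pq0.
  by move=> ->; exists 0; rewrite mulr0 rmorph0.
split.
  by move=> a; exists (repr a); rewrite subnn expr0 mul1r reprK.
split.
  move=> i _; split; first by exists 0; rewrite mulr0 rmorph0.
  split; first by move=> a b [r ->] [s ->]; exists (r + s); rewrite mulrDr rmorphD.
  by move=> r a [s ->]; exists (r * s); rewrite -rmorphM mulrCA.
move=> i hi; have hk := subnSK hi.
have hNk : N = ((N - i.+1) + i.+1)%N by rewrite subnK.
set k := (N - i.+1)%N in hk hNk *.
rewrite -hk.
split.
  by move=> a [r ->]; exists (pi * r); rewrite exprS mulrCA -mulrA.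
split.
  exists (pq (pi ^+ k)); split; first by exists 1; rewrite mulr1.
  case=> r /eqA [t ht].
  have hpk : pi ^+ k != 0 by apply: expf_neq0; case: hpi.
  have h1 : (1 : R) = pi * (r + pi ^+ i * t).
    apply: (mulfI hpk); rewrite mulr1.
    apply/eqP; rewrite -subr_eq0; apply/eqP.
    transitivity (pi ^+ k - pi ^+ k.+1 * r - pi ^+ (k + i.+1) * t).
      by rewrite !exprD !exprS; ring.
    by rewrite -hNk -ht subrr.
  by move: (L_pinu hpi (r + pi ^+ i * t)); rewrite -h1 unitr1.
move=> N' [_ [_ hsc]] sub1 sub2.
case: (pselect (exists b, N' b /\ ~ (exists r, b = pq (pi ^+ k.+1 * r)))) => [[b [hb hnb]]|hno].
  right; have [c hc] := sub2 b hb.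
  have cu : c \in GRing.unit.
    apply/negPn/negP => /(L_nonunit hpi) [c' hc'].
    by apply: hnb; exists c'; rewrite hc hc' mulrA -exprSr.
  move=> a [r ->].
  have -> : pq (pi ^+ k * r) = pq (r * c^-1) * b.
    by rewrite hc -rmorphM; congr (pq _); rewrite mulrACA mulVr // mulr1 mulrC.
  exact: hsc.
left => a ha; case: (pselect (exists r, a = pq (pi ^+ k.+1 * r))) => // hna.
by case: hno; exists a.
Qed.

Lemma testA : pd_test_algebra (\pi_A : {rmorphism R -> A}).
Proof. split; first exact: localA. split; first exact: flA. by exists gam; exact: pdA. Qed.
End QL.
Lemma finj (L L1 : idomainType) (f : {rmorphism L -> L1}) p :
  is_dvr L -> mixed_char L p -> mixed_char L1 p -> forall x, x != 0 -> f x != 0.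
Proof.
move=> [piL hpiL] hL hL1 x x0; apply/negP => /eqP fx0.
have [_ [piLnu hdec]] := hpiL; have [m [w [wu hx]]] := hdec x x0.
have fwu : f w \in GRing.unit by apply: rmorph_unit.
have fw0 : f w != 0 by apply/negP => /eqP h; move: fwu; rewrite h unitr0.
case: m hx => [|m] hx.
  by move: fx0; rewrite hx expr0 mulr1 => /eqP; rewrite (negPf fw0).
have fpi : f piL = 0.
  move: fx0; rewrite hx rmorphM rmorphXn => /eqP; rewrite mulf_eq0 (negPf fw0) /=.
  by rewrite expf_eq0 => /andP [_ /eqP].
case: hL => pp [_ pnu]; have [s hs] := L_nonunit hpiL pnu.
case: hL1 => _ [/(_ p (prime_gt0 pp)) h _].
by move: h; rewrite -(rmorph_nat f) hs rmorphM fpi mul0r eqxx.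
Qed.

Lemma KeyA (L1 : idomainType) (p : nat) (pi1 u1 : L1) (e1 : nat)
  (A : comUnitRingType) (g : {rmorphism L1 -> A}) :
  prime p -> is_uniformizer pi1 -> (p%:R : L1) = u1 * pi1 ^+ e1 ->
  pd_test_algebra g -> (p <= e1)%N -> (p%:R : A) = 0.
Proof.
move=> pp hpi1 hp1 [locA [[n [M [hM0 [hMn [hsub hstep]]]]] [gam hpd]]] hpe.
set a := g pi1.
have anu : a \notin GRing.unit.
  case: n hM0 hMn hsub hstep => [|n] hM0 hMn hsub hstep.
    by have := (hM0 1).1 (hMn 1); move/eqP; rewrite oner_eq0.
  have [_ [[b [hb1 hb0]] hmax]] := hstep 0%N (ltn0Sn n).
  apply/negP => au.
  pose N' := fun c => exists r, c = g (pi1 * r) * b.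
  have sN : is_submodule g N'.
    split; first by exists 0; rewrite mulr0 rmorph0 mul0r.
    split; first by move=> c d [r ->] [s ->]; exists (r + s); rewrite mulrDr rmorphD mulrDl.
    by move=> r c [s ->]; exists (r * s); rewrite mulrA -rmorphM mulrCA.
  have [_ [_ sM1]] := hsub 1%N (ltn0Sn n).
  have b0 : b <> 0 by move=> h; apply: hb0; apply/(hM0 b).2.
  case: (hmax N' sN) => [c /(hM0 c).1 ->|c [r ->]|h|h].
  - by exists 0; rewrite mulr0 rmorph0 mul0r.
  - exact: sM1.
  - have : N' (a * b) by exists 1; rewrite mulr1.
    move/h/(hM0 _).1 => ab0; apply: b0.
    by rewrite -(mulKr au b) ab0 mulr0.
  - have [r hr] := h b hb1.
    have : g (1 + pi1 * - r) * b = 0 by rewrite rmorphD rmorph1 mulrDl mul1r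
      mulrN rmorphN mulNr -hr subrr.
    have hu := rmorph_unit g (L_1pi hpi1 (- r)).
    by move=> hz; apply: b0; rewrite -(mulKr hu b) hz mulr0.
have [g0 [g1 [gI [gD [gM [gP gC]]]]]] := hpd a a anu anu.
have hfact : forall m, a ^+ m = (m`!)%:R * gam m a.
  elim=> [|m IH]; first by rewrite g0 expr0 fact0 mulr1.
  rewrite exprSr IH -{2}g1 -mulrA gP addn1 binSn factS natrM; ring.
have gpnu : gam p a \notin GRing.unit := gI p (prime_gt0 pp).
have hpA : (p%:R : A) = g u1 * a ^+ e1 by rewrite -(rmorph_nat g) hp1 rmorphM rmorphXn.
have ap0 : a ^+ p = 0.
  set c := (p.-1`!)%:R * g u1 * a ^+ (e1 - p) * gam p a.
  have hc : a ^+ p = a ^+ p * c.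
    rewrite {1}hfact -(prednK (prime_gt0 pp)) factS natrM prednK ?prime_gt0 //.
    rewrite hpA /c -{1}(subnKC hpe) exprD; ring.
  have cnu : c \notin GRing.unit by rewrite unitrM negb_and gpnu orbT.
  have cu : (1 - c) \in GRing.unit.
    by apply/negPn/negP => h; move: (locA _ _ h cnu); rewrite subrK unitr1.
  have h0 : a ^+ p * (1 - c) = 0 by rewrite mulrBr mulr1 -hc subrr.
  by rewrite -(mulrK cu (a ^+ p)) h0 mul0r.
by rewrite hpA -(subnKC hpe) exprD ap0 mul0r mulr0.
Qed.

Theorem mainTheorem7 (p : nat) (L L1 : idomainType) (f : {rmorphism L -> L1})
  (pi1 u1 : L1) (e1 : nat) :
  is_dvr L -> is_dvr L1 -> mixed_char L p -> mixed_char L1 p ->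
  local_hom f ->
  is_uniformizer pi1 -> u1 \in GRing.unit -> (p%:R : L1) = u1 * pi1 ^+ e1 ->
  (slightly_ramified f <-> (e1 < p)%N).
Proof.
move=> dvrL _ hL hL1 _ hpi1 hu1 hp1; split.
  move=> hsl; rewrite ltnNge; apply/negP => hpe.
  have pp : prime p by case: hL.
  have : (p%:R : L) = 0.
    apply: hsl => A g hg; rewrite !rmorph_nat.
    exact: (KeyA pp hpi1 hp1 hg hpe).
  by case: hL => _ [/(_ p (prime_gt0 pp)) /eqP].
move=> he x hx; case: (eqVneq x 0) => // x0; exfalso.
have fx0 := finj f dvrL hL hL1 x0.
have [_ [_ hdec]] := hpi1; have [k [v [vu hfx]]] := hdec _ fx0.
have := hx _ _ (testA hpi1 (ltn0Sn k) hL1 hp1 hu1 he).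
rewrite hfx -(rmorph0 (\pi_{ideal_quot (Iid pi1 k.+1)} : {rmorphism L1 -> _})).
move/(eqA hpi1 (ltn0Sn k)) => [t ht].
have hpk : pi1 ^+ k != 0 by apply: expf_neq0; case: hpi1.
have : v = pi1 * t.
  by apply: (mulfI hpk); rewrite mulrA -exprSr -ht subr0 mulrC.
by move=> hv; move: vu; rewrite hv (negPf (L_pinu hpi1 t)).
Qed.
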